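(* Let $\mathscr{G}$ be a class of topological groups and let $G\in\mathscr{G}$ be Abelian. Then for every space $X$, $C_p(X,G)$ is topologically isomorphic to $\mathrm{Chom}_p(F_\mathscr{G}(X),G)$.
   Context: All spaces are Tychonoff and non-empty; topological groups are Hausdorff. $C_p(X,G)$ is the group of continuous maps $X\to G$ with pointwise operations and the topology of pointwise convergence. For topological groups $K,G$ with $G$ Abelian, $\mathrm{Chom}_p(K,G)$ is the group of continuous homomorphisms $K\to G$ as a subspace of $C_p(K,G)$. $\overline{\mathscr{G}}$ is the smallest class of topological groups containing $\mathscr{G}$ closed under arbitrary products and subgroups. The free object $F_\mathscr{G}(X)$ is a topological group in $\overline{\mathscr{G}}$ together with a continuous map $\varphi:X\to F_\mathscr{G}(X)$ such that $\varphi(X)$ algebraically generates $F_\mathscr{G}(X)$ and for every $K\in\overline{\mathscr{G}}$ and continuous $f:X\to K$ there is a (unique) continuous homomorphism $g:F_\mathscr{G}(X)\to K$ with $f=g\circ\varphi$ (equivalently, it is the reflection in $\overline{\mathscr{G}}$ of Markov's free topological group $F(X)$); it is unique up to topological isomorphism. *)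

(* Defs.v *)
From HB Require Import structures.
From mathcomp Require Import all_boot all_order all_algebra.
From mathcomp Require Import all_classical all_reals all_analysis.
From mathcomp Require Import Rstruct Rstruct_topology.

Set Implicit Arguments.
Unset Strict Implicit.
Unset Printing Implicit Defensive.

Local Open Scope classical_set_scope.

(** Hausdorff topological groups (not necessarily abelian), written
    multiplicatively.  The library only has abelian topological
    (Z-)modules, so the structure is given as a record. *)
Record topGroup := TopGroup {
  tg_car :> topologicalType;
  tg_mul : tg_car -> tg_car -> tg_car;
  tg_one : tg_car;
  tg_inv : tg_car -> tg_car;
  tg_mulA : forall x y z, tg_mul x (tg_mul y z) = tg_mul (tg_mul x y) z;
  tg_mul1g : forall x, tg_mul tg_one x = x;
  tg_mulVg : forall x, tg_mul (tg_inv x) x = tg_one;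
  tg_mul_cont : continuous (fun p : tg_car * tg_car => tg_mul p.1 p.2);
  tg_inv_cont : continuous tg_inv;
  tg_hausdorff : hausdorff_space tg_car }.

Arguments tg_mul {t}.
Arguments tg_one {t}.
Arguments tg_inv {t}.

Definition tychonoff_space (X : topologicalType) :=
  hausdorff_space X /\ completely_regular_space X.

Definition abelian_tg (G : topGroup) := forall x y : G, tg_mul x y = tg_mul y x.

Definition is_hom (K H : topGroup) (f : K -> H) :=
  forall x y, f (tg_mul x y) = tg_mul (f x) (f y).

Definition cont_hom (K H : topGroup) (f : K -> H) := continuous f /\ is_hom f.

(** [f] is a topological isomorphism of [K] onto a subgroup of [H]
    (with the subspace topology): an injective continuous homomorphism such
    that [K] carries the initial topology induced by [f]. *)
Definition top_embedding (K H : topGroup) (f : K -> H) :=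
  [/\ cont_hom f, injective f &
      forall U : set K, open U -> exists V : set H, open V /\ f @^-1` V = U].

Definition homeomorphism_tg (S T : topologicalType) (f : S -> T) :=
  exists g : T -> S, [/\ cancel f g, cancel g f, continuous f & continuous g].

(** [K] together with the homomorphisms [p i : K -> H i] is (a copy of) the
    product group of the family [H] with the Tychonoff product topology:
    the induced map [K -> prod_i H i] is a group isomorphism (the group law
    of the product being pointwise, it is a homomorphism iff each [p i] is)
    and a homeomorphism_tg onto [prod_topology]. *)
Definition is_product (I : Type) (H : I -> topGroup) (K : topGroup)
  (p : forall i, K -> H i) :=
  (forall i, is_hom (p i)) /\
  homeomorphism_tg ((fun x i => p i x) : K -> prod_topology (fun i => tg_car (H i))).

Definition subgroup_closed (P : topGroup -> Prop) :=
  forall (K H : topGroup) (f : K -> H), P H -> top_embedding f -> P K.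

Definition product_closed (P : topGroup -> Prop) :=
  forall (I : Type) (H : I -> topGroup) (K : topGroup) (p : forall i, K -> H i),
    (forall i, P (H i)) -> is_product p -> P K.

Definition gclosure (C : topGroup -> Prop) (K : topGroup) :=
  forall P : topGroup -> Prop,
    (forall H, C H -> P H) -> subgroup_closed P -> product_closed P -> P K.

Definition tg_generates (F : topGroup) (S : set F) :=
  forall A : set F,
    S `<=` A -> A tg_one ->
    (forall x y, A x -> A y -> A (tg_mul x y)) ->
    (forall x, A x -> A (tg_inv x)) -> A = setT.

Definition is_free_object (C : topGroup -> Prop) (X : topologicalType)
  (F : topGroup) (phi : X -> F) :=
  [/\ gclosure C F, continuous phi, tg_generates (range phi) &
      forall (K : topGroup) (f : X -> K), gclosure C K -> continuous f ->
        exists g : F -> K, [/\ cont_hom g, f = g \o phi &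
          forall g' : F -> K, cont_hom g' -> f = g' \o phi -> g' = g]].

Definition tg_pmul (T : Type) (G : topGroup) (f g : T -> G) : T -> G :=
  fun t => tg_mul (f t) (g t).

Definition Cp_set (X : topologicalType) (G : topGroup) : set {ptws X -> tg_car G} :=
  [set f | continuous (f : X -> G)].

Definition Chomp_set (K G : topGroup) : set {ptws tg_car K -> tg_car G} :=
  [set g | cont_hom (g : K -> G)].

Definition top_isomorphic_fun_groups (S T : Type) (G : topGroup)
  (A : set {ptws S -> tg_car G}) (B : set {ptws T -> tg_car G}) :=
  exists (Phi : {ptws S -> tg_car G} -> {ptws T -> tg_car G})
         (Psi : {ptws T -> tg_car G} -> {ptws S -> tg_car G}),
  [/\ (forall f, A f -> B (Phi f)),
      (forall g, B g -> A (Psi g)),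
      (forall f, A f -> Psi (Phi f) = f) &
      (forall g, B g -> Phi (Psi g) = g)] /\
  [/\ (forall f1 f2, A f1 -> A f2 -> Phi (tg_pmul f1 f2) = tg_pmul (Phi f1) (Phi f2)),
      {within A, continuous Phi} &
      {within B, continuous Psi}].

Arguments Cp_set : clear implicits.
Arguments Chomp_set : clear implicits.

(* Main.v *)
Require Import Defs.
From mathcomp Require Import all_boot all_order all_algebra.
From mathcomp Require Import all_classical all_reals all_analysis.
Local Open Scope classical_set_scope.

Lemma ptws_cont_into {S : topologicalType} {T : Type} {G : topologicalType}
  (h : S -> {ptws T -> G}) : (forall t, continuous (fun s => h s t)) -> continuous h.
Proof.
move=> hc x; apply/cvg_sup => i A /=.
rewrite nbhsE => -[B [[C oC <-] Bx] BA].
have H := hc i x C (open_nbhs_nbhs (conj oC Bx)).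
rewrite nbhs_simpl /=. move: H; rewrite nbhs_simpl /= nbhsE => -[D oD DC].
by exists D => // s /DC; apply: BA.
Qed.

Lemma ptws_ev_cont {T : Type} {G : topologicalType} (t : T) :
  continuous (fun f : {ptws T -> G} => f t).
Proof.
move=> f A /= Aft.
have /cvg_sup/(_ t) H : (nbhs f) --> (f : {ptws T -> G}) by apply: cvg_id.
apply: H.
exact: (@initial_continuous _ G (fun g : T -> G => g t) f A Aft).
Qed.

Lemma mul_cont (S : topologicalType) (G : topGroup) (a b : S -> G) :
  continuous a -> continuous b -> continuous (fun s => tg_mul (a s) (b s)).
Proof.
move=> ca cb x; apply: continuous2_cvg; [exact: (@tg_mul_cont G (a x, b x)) | exact: ca | exact: cb].
Qed.

Section GroupLemmas.
Variable G : topGroup.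
Implicit Types x y z : G.

Lemma tg_mulgV x : tg_mul x (tg_inv x) = tg_one.
Proof.
have e1 : tg_mul x (tg_inv x) = tg_mul (tg_mul (tg_inv (tg_inv x)) (tg_inv x)) (tg_mul x (tg_inv x)).
  by rewrite tg_mulVg tg_mul1g.
by rewrite e1 -tg_mulA (tg_mulA (tg_inv x) x) tg_mulVg tg_mul1g tg_mulVg.
Qed.

Lemma tg_mulg1 x : tg_mul x tg_one = x.
Proof. by rewrite -(tg_mulVg x) tg_mulA tg_mulgV tg_mul1g. Qed.

Lemma tg_inv_uniq x y : tg_mul x y = tg_one -> x = tg_inv y.
Proof.
by move=> h; rewrite -[x]tg_mulg1 -(tg_mulgV y) tg_mulA h tg_mul1g.
Qed.
End GroupLemmas.

Lemma hom_one (K H : topGroup) (g : K -> H) : is_hom g -> g tg_one = tg_one.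
Proof.
move=> hg; have e : g tg_one = tg_mul (g tg_one) (g tg_one) by rewrite -hg tg_mul1g.
transitivity (tg_mul (tg_inv (g tg_one)) (tg_mul (g tg_one) (g tg_one))).
  by rewrite tg_mulA tg_mulVg tg_mul1g.
by rewrite -e tg_mulVg.
Qed.

Lemma hom_inv (K H : topGroup) (g : K -> H) (z : K) : is_hom g -> g (tg_inv z) = tg_inv (g z).
Proof.
by move=> hg; apply: tg_inv_uniq; rewrite -hg tg_mulVg hom_one.
Qed.

Theorem theorem9p10 (C : topGroup -> Prop) (G : topGroup)
  (HG : C G) (Gab : abelian_tg G)
  (X : topologicalType) (Xtych : tychonoff_space X) (Xne : inhabited X)
  (F : topGroup) (phi : X -> F) (Ffree : is_free_object C phi) :
  top_isomorphic_fun_groups (Cp_set X G) (Chomp_set F G).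
Proof.
move: Ffree => [Fcl phic Fgen Funiv].
have Gcl : gclosure C G by move=> P HP _ _; exact: HP.
have uniq : forall g1 g2 : F -> G, cont_hom g1 -> cont_hom g2 ->
    g1 \o phi = g2 \o phi -> g1 = g2.
  move=> g1 g2 h1 h2 e.
  have c1 : continuous (g1 \o phi).
    by move=> x; apply: continuous_comp; [exact: phic | exact: h1.1].
  have [g0 [_ _ U]] := Funiv G (g1 \o phi) Gcl c1.
  by rewrite (U g1 h1 erefl) (U g2 h2 e).
have lift : forall f : {ptws X -> G}, exists g : {ptws F -> G},
    continuous (f : X -> G) -> cont_hom (g : F -> G) /\ f = g \o phi.
  move=> f; have [cf|ncf] := pselect (continuous (f : X -> G)).
    by have [g [hg fg _]] := Funiv G f Gcl cf; exists g.
  by exists (fun _ => tg_one).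
have [Phi HPhi] := choice lift.
have cPsi : forall g : F -> G, cont_hom g -> continuous (g \o phi).
  by move=> g [gc _] x; apply: continuous_comp; [exact: phic | exact: gc].
have evPhi : forall (f : {ptws X -> G}) x, Cp_set X G f -> f x = Phi f (phi x).
  by move=> f x Af; move: (proj2 (HPhi f Af)) => /(congr1 (fun h => h x)).
exists Phi, (fun g : {ptws F -> G} => (g \o phi : {ptws X -> G})).
split; split.
- by move=> f Af; exact: (HPhi f Af).1.
- by move=> g Bg; exact: cPsi.
- by move=> f Af; rewrite -(HPhi f Af).2.
- move=> g Bg; have [h e] := HPhi _ (cPsi g Bg).
  by apply: (uniq _ _ h Bg); rewrite -e.
- move=> f1 f2 A1 A2.
  have c12 : continuous (tg_pmul f1 f2 : X -> G) by apply: mul_cont.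
  have [h e] := HPhi _ c12.
  have [hc1 hh1] := (HPhi f1 A1).1; have [hc2 hh2] := (HPhi f2 A2).1.
  apply: (uniq _ _ h).
    split; first by apply: mul_cont.
    move=> x y; rewrite /tg_pmul hh1 hh2 -!tg_mulA; congr (tg_mul _ _).
    by rewrite !tg_mulA (Gab (Phi f2 x)).
  by rewrite -e; apply: funext => x /=; rewrite /tg_pmul -!evPhi.
- apply: ptws_cont_into => z.
  set Z := [set z : F | continuous (fun s : subspace (Cp_set X G) => (Phi s : F -> G) z)].
  suff e : Z = setT by have : Z z by rewrite e.
  apply: Fgen.
  + move=> _ [x _ <-]; rewrite /Z /=.
    apply: (@subspace_eq_continuous _ _ _ (fun s : subspace (Cp_set X G) => (s : X -> G) x)).
      by move=> s /set_mem As /=; rewrite evPhi.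
    exact/continuous_subspaceT/ptws_ev_cont.
  + rewrite /Z /=.
    apply: (@subspace_eq_continuous _ _ _ (fun _ => tg_one)).
      by move=> s /set_mem As /=; rewrite hom_one //; exact: (HPhi s As).1.2.
    exact: cst_continuous.
  + move=> z1 z2; rewrite /Z /= => c1 c2.
    apply: (@subspace_eq_continuous _ _ _ (fun s => tg_mul (Phi s z1) (Phi s z2))).
      by move=> s /set_mem As /=; rewrite (HPhi s As).1.2.
    exact: mul_cont.
  + move=> z1; rewrite /Z /= => c1.
    apply: (@subspace_eq_continuous _ _ _ (fun s => tg_inv (Phi s z1))).
      by move=> s /set_mem As /=; rewrite hom_inv //; exact: (HPhi s As).1.2.
    by move=> s; apply: continuous_comp; [exact: c1 | exact: tg_inv_cont].
- apply: continuous_subspaceT; apply: ptws_cont_into => x.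
  exact: ptws_ev_cont.
Qed.
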